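(* Let $E$ be an order continuous Banach lattice with a weak unit, represented over a probability space $(\Omega,\Sigma,\mu)$ as in the context, and let $j:E\to L_1(\mu)$ be the inclusion. Then $j$ is disjointly strictly singular if and only if for every disjoint sequence $(x_n)$ in $S_E$ one has $\|j x_n\|_1\to 0$ as $n\to\infty$.
   Context: A Banach lattice $E$ is order continuous if every net decreasing in order to $0$ converges in norm to $0$; $e\in E_+$ is a weak unit if $|x|\wedge e=0$ implies $x=0$. Representation: every order continuous Banach lattice $E$ with a weak unit can be represented over a probability space $(\Omega,\Sigma,\mu)$ so that $L_\infty(\mu)\subset E\subset L_1(\mu)$, $E$ dense in $L_1(\mu)$, $L_\infty(\mu)$ dense in $E$, $\|f\|_1\le\|f\|_E\le 2\|f\|_\infty$ for $f\in L_\infty(\mu)$, and the order of $E$ induced by $L_1(\mu)$; the inclusion $j$ is then bounded. An operator $T\in\mathrm{L}(E,Y)$ is disjointly strictly singular ($\mathrm{DSS}$) if there is no disjoint sequence $(x_n)$ of non-zero vectors in $E$ such that the restriction of $T$ to the closed span $[x_n]$ is an isomorphism. *)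

(* Defs.v *)
From HB Require Import structures.
From mathcomp Require Import all_boot all_order all_algebra.
From mathcomp Require Import all_classical all_reals all_analysis.
Set Implicit Arguments. Unset Strict Implicit. Unset Printing Implicit Defensive.
Import Order.TTheory GRing.Theory Num.Theory.
Import numFieldNormedType.Exports.
Local Open Scope classical_set_scope.
Local Open Scope ring_scope.

Section Defs.
Context {d : measure_display} {T : measurableType d} {R : realType}.
Variable mu : probability T R.

Definition ae0 (f : T -> R) : Prop := {ae mu, forall t, f t = 0}.
(* f <= g mu-a.e. (the order of L_1(mu), inherited by E) *)
Definition ae_le (f g : T -> R) : Prop := {ae mu, forall t, f t <= g t}.

Definition L1norm (f : T -> R) : \bar R := 'N[mu]_1[EFin \o f]%E.
Definition Linfnorm (f : T -> R) : \bar R := 'N[mu]_+oo[EFin \o f]%E.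

Definition Linfty (f : T -> R) : Prop :=
  measurable_fun setT f /\ (Linfnorm f < +oo)%E.

(* (E, nE) is an order continuous Banach lattice with a weak unit,
   represented over (T, mu) as in the context:
   L_infty(mu) ⊆ E ⊆ L_1(mu), elements are real functions taken up to
   mu-a.e. equality, the lattice order is the a.e. order of L_1(mu). *)
Record repr_OCBL (E : set (T -> R)) (nE : (T -> R) -> R) : Prop := {
  E_int : forall f, E f -> mu.-integrable setT (EFin \o f);
  E_0 : E (cst 0);
  E_add : forall f g, E f -> E g -> E (fun t => f t + g t);
  E_scale : forall (a : R) f, E f -> E (fun t => a * f t);
  nE_triangle : forall f g, E f -> E g ->
     nE (fun t => f t + g t) <= nE f + nE g;
  nE_scale : forall (a : R) f, E f -> nE (fun t => a * f t) = `|a| * nE f;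
  nE_eq0 : forall f, E f -> (nE f = 0 <-> ae0 f);
  (* E is a vector sublattice of L_1(mu) (order induced by L_1(mu)) *)
  E_abs : forall f, E f -> E (fun t => `|f t|);
  nE_lattice : forall f g, E f -> E g ->
     ae_le (fun t => `|f t|) (fun t => `|g t|) -> nE f <= nE g;
  E_complete : forall u : nat -> T -> R, (forall n, E (u n)) ->
     (forall e : R, 0 < e -> exists N, forall m n, (N <= m)%N -> (N <= n)%N ->
        nE (fun t => u m t - u n t) < e) ->
     exists f, E f /\ (forall e : R, 0 < e -> exists N, forall n, (N <= n)%N ->
        nE (fun t => u n t - f t) < e);
  (* order continuity: every net decreasing in order to 0 is norm null *)
  E_order_continuous :
     forall (I : Type) (le : I -> I -> Prop) (x : I -> T -> R),
     inhabited I ->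
     (forall i, le i i) -> (forall i j k, le i j -> le j k -> le i k) ->
     (forall i j, exists k, le i k /\ le j k) ->
     (forall i, E (x i)) ->
     (forall i j, le i j -> ae_le (x j) (x i)) ->
     (forall i, ae_le (cst 0) (x i)) ->
     (forall y, E y -> (forall i, ae_le y (x i)) -> ae_le y (cst 0)) ->
     forall e : R, 0 < e -> exists i0, forall i, le i0 i -> nE (x i) < e;
  E_weak_unit : exists w, E w /\ ae_le (cst 0) w /\
     forall x, E x -> ae0 (fun t => Num.min `|x t| (w t)) -> ae0 x;
  Linfty_sub : forall f, Linfty f -> E f;
  norm_bounds : forall f, Linfty f ->
     (L1norm f <= (nE f)%:E <= 2%:E * Linfnorm f)%E;
  Linfty_dense : forall f, E f -> forall e : R, 0 < e ->
     exists g, Linfty g /\ nE (fun t => f t - g t) < e;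
  E_dense_L1 : forall f, mu.-integrable setT (EFin \o f) ->
     forall e : R, 0 < e ->
     exists g, E g /\ (L1norm (fun t => (f t - g t)%R) < e%:E)%E;
  j_bounded : exists C : R, forall f, E f -> (L1norm f <= (C * nE f)%:E)%E
}.

Definition span (x : nat -> T -> R) : set (T -> R) :=
  [set y | exists (n : nat) (a : nat -> R),
     y = fun t => \sum_(i < n) a i * x i t].

Definition closed_span (E : set (T -> R)) (nE : (T -> R) -> R)
    (x : nat -> T -> R) : set (T -> R) :=
  [set y | E y /\ forall e : R, 0 < e ->
     exists z, span x z /\ nE (fun t => y t - z t) < e].

Definition disjoint_seq (x : nat -> T -> R) : Prop :=
  forall n m, n <> m -> ae0 (fun t => Num.min `|x n t| `|x m t|).

Definition j_DSS (E : set (T -> R)) (nE : (T -> R) -> R) : Prop :=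
  ~ exists x : nat -> T -> R,
      (forall n, E (x n)) /\ (forall n, ~ ae0 (x n)) /\ disjoint_seq x /\
      exists c C : R, 0 < c /\ 0 < C /\
        forall y, closed_span E nE x y ->
          ((c * nE y)%:E <= L1norm y <= (C * nE y)%:E)%E.

End Defs.

(* Main.v *)
Require Import Defs.
From HB Require Import structures.
From mathcomp Require Import all_boot all_order all_algebra.
From mathcomp Require Import all_classical all_reals all_analysis.
From mathcomp Require Import lra ring measurable_realfun.
Import Order.TTheory GRing.Theory Num.Theory.
Import numFieldNormedType.Exports.
Local Open Scope classical_set_scope.
Local Open Scope ring_scope.
Set Implicit Arguments. Unset Strict Implicit.

Section Helpers.
Context (d : measure_display) (T : measurableType d) (R : realType)
  (mu : probability T R) (E : set (T -> R)) (nE : (T -> R) -> R)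
  (H : repr_OCBL mu E nE).

Lemma nE0 : nE (cst 0) = 0.
Proof. by apply/(nE_eq0 H (E_0 H)); apply: aeW. Qed.

Lemma E_opp f : E f -> E (fun t => - f t).
Proof.
move=> Ef; have := E_scale H (-1) Ef.
by congr E; apply/funext => t; rewrite mulN1r.
Qed.

Lemma E_sub f g : E f -> E g -> E (fun t => f t - g t).
Proof. by move=> Ef Eg; apply: (E_add H Ef (E_opp Eg)). Qed.

Lemma nE_ge0 f : E f -> 0 <= nE f.
Proof.
move=> Ef; have := nE_triangle H Ef (E_scale H (-1) Ef).
have -> : (fun t => f t + -1 * f t) = cst 0.
  by apply/funext => t; rewrite mulN1r subrr.
rewrite nE0 (nE_scale H _ Ef) normrN normr1 mul1r.
lra.
Qed.

Lemma nE_subC f g : E f -> E g -> nE (fun t => f t - g t) = nE (fun t => g t - f t).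
Proof.
move=> Ef Eg; have := nE_scale H (-1) (E_sub Eg Ef).
rewrite normrN normr1 mul1r => <-; congr nE; apply/funext => t.
by rewrite mulN1r opprB.
Qed.

Lemma nE_tri_sub y z : E y -> E z -> nE y <= nE z + nE (fun t => y t - z t).
Proof.
move=> Ey Ez; have := nE_triangle H Ez (E_sub Ey Ez).
by have -> : (fun t => z t + (y t - z t)) = y by apply/funext => t; rewrite addrC subrK.
Qed.

Lemma E_meas f : E f -> measurable_fun setT f.
Proof. by move=> /(E_int H) /integrableP [/measurable_EFinP]. Qed.

Lemma L1E f : L1norm mu f = (\int[mu]_x @EFin R (`|f x|)%R)%E.
Proof. by rewrite /L1norm Lnorm1. Qed.

Lemma L1_fin f : E f -> L1norm mu f = (fine (L1norm mu f))%:E.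
Proof.
move=> Ef; rewrite fineK // ge0_fin_numE ?Lnorm_ge0 // L1E.
by have /integrableP[_] := E_int H Ef.
Qed.

Definition l f := fine (L1norm mu f).

Lemma l_ge0 f : 0 <= l f.
Proof. by apply: fine_ge0; apply: Lnorm_ge0. Qed.

Lemma mabs f : E f -> measurable_fun setT (fun x => @EFin R `|f x|).
Proof.
move=> Ef; apply/measurable_EFinP; apply: measurableT_comp => //.
exact: E_meas.
Qed.

Lemma l_tri y z : E y -> E z -> l z <= l y + l (fun t => z t - y t).
Proof.
move=> Ey Ez.
have Ezy := E_sub Ez Ey.
suff : (L1norm mu z <= L1norm mu y + L1norm mu (fun t => z t - y t)%R)%E.
  by rewrite (L1_fin Ez) (L1_fin Ey) (L1_fin Ezy).
rewrite !L1E -ge0_integralD //; last 2 first.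
- exact: mabs. - exact: mabs.
apply: ge0_le_integral => //.
- exact: mabs.
- by apply: emeasurable_funD; apply: mabs.
move=> x _; rewrite -EFinD lee_fin.
by have := ler_normD (y x) (z x - y x); rewrite addrC subrK.
Qed.

Lemma l_bound : exists C : R, 0 < C /\ forall f, E f -> l f <= C * nE f.
Proof.
have [C HC] := j_bounded H.
exists (Num.max C 1); split; first by rewrite lt_max ltr01 orbT.
move=> f Ef; have := HC f Ef; rewrite (L1_fin Ef) lee_fin => h.
apply: (le_trans h); apply: ler_wpM2r; first exact: nE_ge0.
by rewrite le_max lexx.
Qed.


Lemma disj_ae (w : nat -> T -> R) : disjoint_seq mu w ->
  {ae mu, forall t, forall i j : nat, i <> j -> Num.min `|w i t| `|w j t| = 0}.
Proof.
move=> Hd; apply: ae_foralln => i; apply: ae_foralln => j.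
have [->|ij] := eqVneq i j; first by apply: aeW => t.
have ij' : i <> j by apply/eqP.
by apply: filterS (Hd i j ij') => t ht _.
Qed.

Lemma abs_sum_disj (w : nat -> T -> R) (a : nat -> R) t n :
  (forall i j : nat, i <> j -> Num.min `|w i t| `|w j t| = 0) ->
  `|\sum_(i < n) a i * w i t| = \sum_(i < n) `|a i| * `|w i t|.
Proof.
move=> Hd; elim: n => [|n IH]; first by rewrite !big_ord0 normr0.
rewrite !big_ord_recr /=.
have [->|wn0] := eqVneq (w n t) 0; first by rewrite !normr0 !mulr0 !addr0.
have hi : forall i : 'I_n, w i t = 0.
  move=> i; have iw : (i : nat) <> n by apply/eqP; rewrite ltn_eqF.
  have := Hd i n iw.
  rewrite minEle; case: ifP => [_ /eqP|_ /eqP]; rewrite normr_eq0 => /eqP //.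
    by move=> h; rewrite h eqxx in wn0.
rewrite !big1 ?add0r ?normrM // => i _; by rewrite hi ?normr0 mulr0.
Qed.

Lemma E_sum (w : nat -> T -> R) (a : nat -> R) n : (forall i, E (w i)) ->
  E (fun t => \sum_(i < n) a i * w i t).
Proof.
move=> Ew; elim: n => [|n IH].
  have -> : (fun t => \sum_(i < 0) a i * w i t) = cst 0
    by apply/funext => t; rewrite big_ord0.
  exact: E_0 H.
have -> : (fun t => \sum_(i < n.+1) a i * w i t) =
  (fun t => (\sum_(i < n) a i * w i t) + a n * w n t)
  by apply/funext => t; rewrite big_ord_recr.
exact (E_add H IH (E_scale H (a n) (Ew n))).
Qed.

Lemma nE_sum (w : nat -> T -> R) (a : nat -> R) n : (forall i, E (w i)) ->
  nE (fun t => \sum_(i < n) a i * w i t) <= \sum_(i < n) `|a i| * nE (w i).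
Proof.
move=> Ew; elim: n => [|n IH].
  have -> : (fun t => \sum_(i < 0) a i * w i t) = cst 0
    by apply/funext => t; rewrite big_ord0.
  by rewrite nE0 big_ord0.
have -> : (fun t => \sum_(i < n.+1) a i * w i t) =
  (fun t => (\sum_(i < n) a i * w i t) + a n * w n t)
  by apply/funext => t; rewrite big_ord_recr.
rewrite big_ord_recr /=.
apply: (le_trans (nE_triangle H (E_sum a n Ew) (E_scale H (a n) (Ew n)))).
by rewrite (nE_scale H _ (Ew n)) lerD2r.
Qed.

Lemma L1_sum (w : nat -> T -> R) (a : nat -> R) n : (forall i, E (w i)) ->
  disjoint_seq mu w ->
  L1norm mu (fun t => \sum_(i < n) a i * w i t) =
  (\sum_(i < n) `|a i| * l (w i))%:E.
Proof.
move=> Ew Hd; rewrite L1E.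
have mw i : measurable_fun setT (w i) by exact: E_meas.
rewrite (ae_eq_integral (fun x => @EFin R (\sum_(i < n) `|a i| * `|w i x|)%R)) //.
- under eq_integral do rewrite -sumEFin.
  rewrite (@ge0_integral_sum _ _ _ mu setT measurableT _
    (fun (i : 'I_n) x => @EFin R (`|a i| * `|w i x|)%R)); last 2 first.
  + move=> i; apply/measurable_EFinP; apply: measurable_funM => //.
    exact: measurableT_comp.
  + by move=> i x _; rewrite lee_fin mulr_ge0.
  rewrite -sumEFin; apply: eq_bigr => i _.
  under eq_integral do rewrite EFinM.
  rewrite ge0_integralZl //; last first.
    by apply/measurable_EFinP; exact: measurableT_comp.
  by rewrite -(L1E (w i)) (L1_fin (Ew i)) EFinM.
- apply/measurable_EFinP; apply: measurableT_comp => //.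
  apply: measurable_sum => i; exact: measurable_funM.
- apply/measurable_EFinP; apply: measurable_sum => i.
  apply: measurable_funM => //; exact: measurableT_comp.
- apply: filterS (disj_ae Hd) => t ht _.
  by rewrite abs_sum_disj.
Qed.

End Helpers.

Fixpoint sidx (g : nat -> nat) (k : nat) : nat :=
  match k with 0 => g 0%N | k'.+1 => g (sidx g k').+1 end.

Lemma sidx_inj (g : nat -> nat) : (forall N, (N <= g N)%N) -> injective (sidx g).
Proof.
move=> Hg.
have phiS : forall k, (sidx g k < sidx g k.+1)%N by move=> k /=; exact: Hg.
have phi_lt := homo_ltn ltn_trans phiS.
move=> i j hij; case: (ltngtP i j) => // h; have := phi_lt _ _ h;
  by rewrite hij ltnn.
Qed.

Lemma sidx_P (g : nat -> nat) (P : nat -> Prop) : (forall N, P (g N)) ->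
  forall k, P (sidx g k).
Proof. by move=> Hg [|k] /=; apply: Hg. Qed.

Theorem proposition4p1 (d : measure_display) (T : measurableType d)
  (R : realType) (mu : probability T R)
  (E : set (T -> R)) (nE : (T -> R) -> R) :
  repr_OCBL mu E nE ->
  (j_DSS mu E nE <->
   forall x : nat -> T -> R,
     (forall n, E (x n) /\ nE (x n) = 1) -> disjoint_seq mu x ->
     (L1norm mu \o x) @ \oo --> 0%E).
Proof.
move=> H; split.
- move=> Hdss x Hx Hd.
  apply/fine_cvgP; split.
    by apply: nearW => n /=; rewrite (L1_fin H (Hx n).1).
  apply/cvgrPdist_lt => e e0.
  apply: contrapT => Hn.
  have Hinf : forall N, exists n, (N <= n)%N /\ e <= l mu (x n).
    move=> N; apply: contrapT => hN; apply: Hn; exists N => // n /= Nn.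
    rewrite sub0r normrN ger0_norm ?l_ge0 // ltNge; apply/negP => h.
    by apply: hN; exists n.
  have [g Hg] := choice Hinf.
  pose phi := sidx g.
  have phi_inj : injective phi by apply: sidx_inj => N; case: (Hg N).
  have phi_e : forall k, e <= l mu (x (phi k)).
    by apply: (sidx_P (P := fun n => e <= l mu (x n))) => N; case: (Hg N).
  have [C [C0 HC]] := l_bound H.
  apply: Hdss; exists (fun k => x (phi k)); split; first by move=> k; exact: (Hx _).1.
  split.
    move=> k h; have := (nE_eq0 H (Hx (phi k)).1).2 h.
    by rewrite (Hx _).2 => /eqP; rewrite oner_eq0.
  split.
    move=> i j ij; apply: Hd => /phi_inj; exact: ij.
  exists e, C; split => //; split => // z [Ez Happr].
  rewrite (L1_fin H Ez) !lee_fin; apply/andP; split; last exact: HC.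
  have nz0 := nE_ge0 H Ez.
  apply/ler_addgt0Pr => eps eps0.
  have eps'0 : 0 < eps / (e + C) by apply: divr_gt0 => //; lra.
  have [w [[m [a ->]] Hw]] := Happr _ eps'0.
  set wf := (fun t => \sum_(i < m) a i * x (phi i) t).
  have Ey : forall i, E (x (phi i)) by move=> i; exact: (Hx _).1.
  have Ew : E wf := E_sum H a m Ey.
  have h1 : nE wf <= \sum_(i < m) `|a i|.
    apply: le_trans (nE_sum H a m Ey) _.
    by apply: ler_sum => i _; rewrite (Hx _).2 mulr1.
  have h2 : e * \sum_(i < m) `|a i| <= l mu wf.
    rewrite /l (L1_sum H a m Ey) /=; last first.
      move=> i j ij; apply: Hd => /phi_inj; exact: ij.
    rewrite mulr_sumr; apply: ler_sum => i _.
    by rewrite mulrC ler_wpM2l.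
  have h3 := nE_tri_sub H Ez Ew.
  have h4 := l_tri H Ez Ew.
  have h5 := HC _ (E_sub H Ew Ez).
  rewrite (nE_subC H Ew Ez) in h5.
  have h6 : e * nE z <= e * nE wf + e * nE (fun t => z t - wf t).
    by rewrite -mulrDr ler_wpM2l //; lra.
  have h7 : e * nE (fun t => z t - wf t) <= e * (eps / (e + C)).
    by apply: ler_wpM2l; lra.
  have h8 : C * nE (fun t => z t - wf t) <= C * (eps / (e + C)).
    by apply: ler_wpM2l; lra.
  have h9 : e * (eps / (e + C)) + C * (eps / (e + C)) = eps.
    by field; lra.
  have h10 : e * nE wf <= e * \sum_(i < m) `|a i| by apply: ler_wpM2l; lra.
  change (e * nE z <= l mu z + eps).
  lra.
- move=> Hconv [x [Ex [Hnz [Hd [c [C [c0 [C0 Hiso]]]]]]]].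
  have npos : forall n, 0 < nE (x n).
    move=> n; rewrite lt_def (nE_ge0 H (Ex n)) andbT; apply/eqP => h.
    by apply: (Hnz n); apply/(nE_eq0 H (Ex n)).
  pose y n := fun t => (nE (x n))^-1 * x n t.
  have Ey : forall n, E (y n) by move=> n; exact (E_scale H _ (Ex n)).
  have ny : forall n, nE (y n) = 1.
    move=> n; rewrite /y (nE_scale H _ (Ex n)) ger0_norm ?mulVf //.
      by apply: lt0r_neq0.
    by rewrite invr_ge0 ltW.
  have Hdy : disjoint_seq mu y.
    move=> n m nm; apply: filterS (Hd n m nm) => t ht.
    have : `|x n t| = 0 \/ `|x m t| = 0.
      by move: ht; rewrite minEle; case: ifP; auto.
    rewrite /y !normrM; case=> ->; rewrite mulr0.
      by rewrite min_l // mulr_ge0.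
    by rewrite min_r // mulr_ge0.
  have := Hconv y (fun n => conj (Ey n) (ny n)) Hdy.
  move=> /fine_cvgP [_] /cvgrPdist_lt /(_ c c0) [N _ hN].
  have := hN N (leqnn N); rewrite sub0r normrN ger0_norm ?l_ge0 //= => hl.
  have yN : closed_span E nE x (y N).
    split => // eps eps0.
    pose a := fun i : nat => if i == N then (nE (x N))^-1 else 0.
    exists (fun t => \sum_(i < N.+1) a i * x i t); split; first by exists N.+1, a.
    have -> : (fun t => y N t - \sum_(i < N.+1) a i * x i t) = cst 0.
      apply/funext => t; rewrite big_ord_recr /= /a eqxx big1 ?add0r ?subrr //.
      by move=> i _; rewrite ifN ?mul0r // ltn_eqF.
    by rewrite (nE0 H).
  have := Hiso _ yN; rewrite ny mulr1 (L1_fin H (Ey N)) !lee_fin => /andP [h _].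
  have : c <= l mu (y N) by [].
  lra.
Qed.
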